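(* Let $L/K_P$ be a finite extension. There is a unique homomorphism $r:\mathbf{S}_L\to\mathbb{Q}$ such that for every $s\in\mathbf{S}_L$ and every $\alpha\in L^+$, $v_L(\alpha^s)=r(s)\cdot v_L(\alpha)$.
   Context: $P$ is a closed point of a smooth projective curve over a finite field of characteristic $p$, $K_P$ the completion of the function field at $P$, $\mathbb{C}_P$ the completion of an algebraic closure of $K_P$, $v_L=e_{L/K_P}v_P$ the normalized valuation of $L$ extended to $\mathbb{C}_P$. $L^+=L^\times/\mu_L$ ($\mu_L$ = roots of unity of $L$), and $U_L$ denotes the $1$-units of $L$, identified with a subgroup of $L^+$. The Goss plane $\mathbf{S}_L$ is the group of homomorphisms $s:L^+\to\mathbb{C}_P^\times$ for which there is $y(s)\in\mathbb{Z}_p$ with $s(u)=u^{y(s)}$ for all $u\in U_L$; one writes $\alpha^s=s(\alpha)$ and the group law on $\mathbf{S}_L$ additively. *)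

(* Defs.v *)
(* Abstract (axiomatized-by-hypotheses) setting for the
   completion C_P of an algebraic closure of a local field K_P of char p. *)
From HB Require Import structures.
From mathcomp Require Import all_boot all_order all_algebra.
Set Implicit Arguments. Unset Strict Implicit. Unset Printing Implicit Defensive.
Import Order.TTheory GRing.Theory Num.Theory.
Local Open Scope ring_scope.

Section ValuedField.
Variables (C : fieldType) (v : C -> rat).

(* v is a (rank one, Q-valued) valuation on C^x; v 0 is irrelevant *)
Definition is_valuation : Prop :=
  (forall x y : C, x != 0 -> y != 0 -> v (x * y) = v x + v y) /\
  (forall x y : C, x != 0 -> y != 0 -> x + y != 0 ->
     Num.min (v x) (v y) <= v (x + y)).

(* x and y are M-close: |x - y| <= exp(-M) *)
Definition vclose (M : rat) (x y : C) : Prop := x = y \/ M <= v (x - y).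

Definition vlim (a : nat -> C) (l : C) : Prop :=
  forall M : rat, exists N : nat, forall n, (N <= n)%N -> vclose M (a n) l.

Definition vcauchy (a : nat -> C) : Prop :=
  forall M : rat, exists N : nat, forall m n, (N <= m)%N -> (N <= n)%N ->
    vclose M (a m) (a n).

Definition vcomplete (A : {pred C}) : Prop :=
  forall a : nat -> C, (forall n, a n \in A) -> vcauchy a ->
    exists2 l, l \in A & vlim a l.

Definition is_subfield (A : {pred C}) : Prop :=
  [/\ 0 \in A, 1 \in A,
      forall x y, x \in A -> y \in A -> x - y \in A,
      forall x y, x \in A -> y \in A -> x * y \in A &
      forall x, x \in A -> x != 0 -> x^-1 \in A].

(* the residue field O_A / m_A of A is finite *)
Definition finite_residue (A : {pred C}) : Prop :=
  exists s : seq C, (forall y, y \in s -> y \in A /\ (y = 0 \/ 0 <= v y)) /\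
    forall x, x \in A -> (x = 0 \/ 0 <= v x) ->
      exists2 y, y \in s & (x = y \/ 0 < v (x - y)).

Definition algebraic_over (A : {pred C}) (x : C) : Prop :=
  exists q : {poly C}, [/\ q != 0, forall i, q`_i \in A & root q x].

Definition finite_ext (K L : {pred C}) : Prop :=
  {subset K <= L} /\
  exists b : seq C, (forall y, y \in b -> y \in L) /\
    forall x, x \in L -> exists c : nat -> C,
      (forall i, c i \in K) /\ x = \sum_(i < size b) c i * b`_i.

End ValuedField.

Section GossPlane.
Variables (C : fieldType) (v : C -> rat) (p : nat) (L : {pred C}).

Definition root_of_unity_in (z : C) : Prop :=
  z \in L /\ exists n : nat, (0 < n)%N /\ z ^+ n = 1.

Definition one_unit (u : C) : Prop := u \in L /\ (u = 1 \/ 0 < v (u - 1)).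

(* s : C -> C represents a homomorphism L^+ = L^x / mu_L -> C^x
   (only its values on L^x matter) *)
Definition hom_Lplus (s : C -> C) : Prop :=
  [/\ forall x y, x \in L -> y \in L -> x != 0 -> y != 0 -> s (x * y) = s x * s y,
      forall x, x \in L -> x != 0 -> s x != 0 &
      forall z, root_of_unity_in z -> s z = 1].

(* A p-adic integer y in Z_p, represented by a sequence of naturals
   y_n with y_(n+1) = y_n mod p^n (e.g. its truncations); for a 1-unit u,
   u^y is the v-adic limit of u^(y_n). *)
Definition padic_seq (y : nat -> nat) : Prop :=
  forall n, y n.+1 = y n %[mod p ^ n].

Definition in_Goss (s : C -> C) : Prop :=
  hom_Lplus s /\
  exists2 y : nat -> nat, padic_seq y &
    forall u, one_unit u -> vlim v (fun n => u ^+ y n) (s u).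

(* additive group law of S_L: (s + t)(alpha) = alpha^s alpha^t *)
Definition goss_add (s t : C -> C) : C -> C := fun x => s x * t x.

Definition goss_hom (r : (C -> C) -> rat) : Prop :=
  forall s t, in_Goss s -> in_Goss t -> r (goss_add s t) = r s + r t.

End GossPlane.

(* Main.v *)
Require Import Defs.
From HB Require Import structures.
From mathcomp Require Import all_boot all_order all_algebra.
Set Implicit Arguments. Unset Strict Implicit. Unset Printing Implicit Defensive.
Import Order.TTheory GRing.Theory Num.Theory.
Local Open Scope ring_scope.


Section Val.
Variables (C : fieldType) (v : C -> rat).
Hypothesis Hv : is_valuation v.

Lemma vM x y : x != 0 -> y != 0 -> v (x * y) = v x + v y.
Proof. by case: Hv => H _; apply: H. Qed.

Lemma vD x y : x != 0 -> y != 0 -> x + y != 0 -> Num.min (v x) (v y) <= v (x + y).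
Proof. by case: Hv => _ H; apply: H. Qed.

Lemma v1 : v 1 = 0.
Proof.
have := vM (oner_neq0 C) (oner_neq0 C); rewrite mulr1 => H.
have : v 1 + v 1 - v 1 = v 1 - v 1 by rewrite -H.
by rewrite addrK subrr.
Qed.

Lemma vN1 : v (-1) = 0.
Proof.
have h : (-1 : C) != 0 by rewrite oppr_eq0 oner_neq0.
have := vM h h; rewrite mulrNN mulr1 v1 => H.
have : (2 : rat) * v (-1) = 0 by rewrite mulr2n mulrDl mul1r -H.
by move/eqP; rewrite mulf_eq0 /= => /eqP.
Qed.

Lemma vN x : x != 0 -> v (- x) = v x.
Proof.
move=> hx; rewrite -mulN1r vM ?vN1 ?add0r //.
by rewrite oppr_eq0 oner_neq0.
Qed.

Lemma vV x : x != 0 -> v (x^-1) = - v x.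
Proof.
move=> hx; have := vM hx (invr_neq0 hx); rewrite mulfV // v1 => H.
by apply/eqP; rewrite -addr_eq0 addrC -H.
Qed.

Lemma vX x n : x != 0 -> v (x ^+ n) = n%:R * v x.
Proof.
move=> hx; elim: n => [|n IH]; first by rewrite expr0 v1 mul0r.
by rewrite exprS vM ?expf_neq0 // IH mulrSr mulrDl mul1r addrC.
Qed.

Lemma vstrict x y : x != 0 -> y != 0 -> x + y != 0 -> v x < v y -> v (x + y) = v x.
Proof.
move=> hx hy hxy lt.
have h1 := vD hx hy hxy.
have e1 : Num.min (v x) (v y) = v x by apply/min_idPl; apply: ltW.
rewrite e1 in h1.
have h2 : (x + y) + - y = x by rewrite addrK.
have hny : - y != 0 by rewrite oppr_eq0.
have h3 := vD hxy hny; rewrite h2 vN // in h3.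
have h4 := h3 hx.
apply/eqP; rewrite eq_le h1 andbT.
move: h4; rewrite ge_min => /orP [//|hh2].
by have := lt_le_trans lt hh2; rewrite ltxx.
Qed.

Definition mI (x : C) : Prop := x = 0 \/ 0 < v x.
Definition OI (x : C) : Prop := x = 0 \/ 0 <= v x.
Definition eqv (x y : C) : Prop := mI (x - y).

Lemma mI0 : mI 0. Proof. by left. Qed.
Lemma OI0 : OI 0. Proof. by left. Qed.
Lemma OI1 : OI 1. Proof. by right; rewrite v1. Qed.

Lemma mI_add x y : mI x -> mI y -> mI (x + y).
Proof.
case=> [->|hx]; first by rewrite add0r.
case=> [->|hy]; first by rewrite addr0; right.
have [->|x0] := eqVneq x 0; first by rewrite add0r; right.
have [->|y0] := eqVneq y 0; first by rewrite addr0; right.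
have [->|hxy] := eqVneq (x + y) 0; first by left.
right; apply: lt_le_trans (vD x0 y0 hxy).
by rewrite lt_min hx hy.
Qed.

Lemma OI_add x y : OI x -> OI y -> OI (x + y).
Proof.
case=> [->|hx]; first by rewrite add0r.
case=> [->|hy]; first by rewrite addr0; right.
have [->|x0] := eqVneq x 0; first by rewrite add0r; right.
have [->|y0] := eqVneq y 0; first by rewrite addr0; right.
have [->|hxy] := eqVneq (x + y) 0; first by left.
right; apply: le_trans (vD x0 y0 hxy).
by rewrite le_min hx hy.
Qed.

Lemma mI_opp x : mI x -> mI (- x).
Proof.
case=> [->|hx]; first by rewrite oppr0; left.
have [->|x0] := eqVneq x 0; first by rewrite oppr0; left.
by right; rewrite vN.
Qed.

Lemma OI_opp x : OI x -> OI (- x).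
Proof.
case=> [->|hx]; first by rewrite oppr0; left.
have [->|x0] := eqVneq x 0; first by rewrite oppr0; left.
by right; rewrite vN.
Qed.

Lemma OI_mul x y : OI x -> OI y -> OI (x * y).
Proof.
case=> [->|hx]; first by rewrite mul0r; left.
case=> [->|hy]; first by rewrite mulr0; left.
have [->|x0] := eqVneq x 0; first by rewrite mul0r; left.
have [->|y0] := eqVneq y 0; first by rewrite mulr0; left.
by right; rewrite vM // addr_ge0.
Qed.

Lemma mI_mul x y : OI x -> mI y -> mI (x * y).
Proof.
case=> [->|hx]; first by rewrite mul0r; left.
case=> [->|hy]; first by rewrite mulr0; left.
have [->|x0] := eqVneq x 0; first by rewrite mul0r; left.
have [->|y0] := eqVneq y 0; first by rewrite mulr0; left.
by right; rewrite vM // ltr_wpDl.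
Qed.

Lemma mI_sum (I : Type) (r : seq I) (P : pred I) (F : I -> C) :
  (forall i, P i -> mI (F i)) -> mI (\sum_(i <- r | P i) F i).
Proof. by move=> H; apply: big_ind => //; [exact: mI0 | exact: mI_add]. Qed.

Lemma mI_sum_seq (r : seq nat) (F : nat -> C) :
  (forall i, i \in r -> mI (F i)) -> mI (\sum_(i <- r) F i).
Proof.
elim: r => [|a r IH] H; first by rewrite big_nil; left.
rewrite big_cons; apply: mI_add; first by apply: H; rewrite inE eqxx.
by apply: IH => i hi; apply: H; rewrite inE hi orbT.
Qed.

Lemma eqv_refl x : eqv x x. Proof. by rewrite /eqv subrr; left. Qed.
Lemma eqv_sym x y : eqv x y -> eqv y x.
Proof. by rewrite /eqv => /mI_opp; rewrite opprB. Qed.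
Lemma eqv_trans x y z : eqv x y -> eqv y z -> eqv x z.
Proof.
rewrite /eqv => h1 h2; have := mI_add h1 h2.
by rewrite addrA subrK.
Qed.
Lemma eqv_add x y x' y' : eqv x x' -> eqv y y' -> eqv (x + y) (x' + y').
Proof.
rewrite /eqv => h1 h2; have := mI_add h1 h2.
by rewrite opprD addrACA.
Qed.
Lemma eqv_mul c x y : OI c -> eqv x y -> eqv (c * x) (c * y).
Proof. by rewrite /eqv -mulrBr; apply: mI_mul. Qed.

Lemma eqv_sum (I : Type) (r : seq I) (P : pred I) (F G : I -> C) :
  (forall i, P i -> eqv (F i) (G i)) ->
  eqv (\sum_(i <- r | P i) F i) (\sum_(i <- r | P i) G i).
Proof.
move=> H; apply: (big_ind2 eqv) => //; first exact: eqv_refl.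
by move=> *; apply: eqv_add.
Qed.

End Val.


Section Sub.
Variables (C : fieldType) (K : {pred C}).
Hypothesis HK : is_subfield K.

Lemma K0 : 0 \in K. Proof. by case: HK. Qed.
Lemma K1 : 1 \in K. Proof. by case: HK. Qed.
Lemma KB x y : x \in K -> y \in K -> x - y \in K. Proof. by case: HK => _ _ H _ _; apply: H. Qed.
Lemma KM x y : x \in K -> y \in K -> x * y \in K. Proof. by case: HK => _ _ _ H _; apply: H. Qed.
Lemma KN x : x \in K -> - x \in K.
Proof. by move=> hx; rewrite -sub0r; apply: KB => //; apply: K0. Qed.
Lemma KD x y : x \in K -> y \in K -> x + y \in K.
Proof. by move=> hx hy; rewrite -[y]opprK; apply: KB => //; apply: KN. Qed.
Lemma KV x : x \in K -> x^-1 \in K.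
Proof.
have [->|x0] := eqVneq x 0; first by rewrite invr0.
by case: HK => _ _ _ _ H hx; apply: H.
Qed.
Lemma Kdiv x y : x \in K -> y \in K -> x / y \in K.
Proof. by move=> hx hy; apply: KM => //; apply: KV. Qed.
Lemma KX x n : x \in K -> x ^+ n \in K.
Proof.
by move=> hx; elim: n => [|n IH]; [rewrite expr0; apply: K1 | rewrite exprS; apply: KM].
Qed.
Lemma Ksum (I : Type) (r : seq I) (P : pred I) (F : I -> C) :
  (forall i, P i -> F i \in K) -> \sum_(i <- r | P i) F i \in K.
Proof. by move=> H; apply: (big_ind (fun x => x \in K)) => //; [exact: K0 | exact: KD]. Qed.

Lemma dep (b : nat -> C) d : forall (s : seq nat) (w : nat -> C) (c : nat -> nat -> C),
  uniq s -> (d < size s)%N -> (forall i j, c i j \in K) ->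
  (forall i, i \in s -> w i = \sum_(j < d) c i j * b j) ->
  exists a : nat -> C, (forall i, a i \in K) /\ (exists2 i, i \in s & a i != 0) /\
    \sum_(i <- s) a i * w i = 0.
Proof.
elim: d => [|d IH] s w c us hs hc hw.
  case: s us hs hw => [//|i0 s'] us _ hw.
  exists (fun i => if i == i0 then 1 else 0); split.
    by move=> i; case: (i == i0); [apply: K1 | apply: K0].
  split; first by exists i0; rewrite ?inE eqxx ?oner_neq0.
  rewrite big1_seq // => i /andP [_ hi].
  by rewrite hw // big_ord0 mulr0.
have [/hasP [k ks ck] | /hasPn H0] := boolP (has (fun k => c k d != 0) s); last first.
  apply: (IH s w c us (ltnW hs) hc) => i hi.
  rewrite hw // big_ord_recr /=.
  have := H0 i hi; rewrite negbK => /eqP ->.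
  by rewrite mul0r addr0.
pose s' := rem k s.
pose t i := c i d / c k d.
pose w' i := w i - t i * w k.
pose c' i j := c i j - t i * c k j.
have hc' : forall i j, c' i j \in K.
  by move=> i j; apply: KB => //; apply: KM => //; apply: Kdiv.
have hw' : forall i, i \in s' -> w' i = \sum_(j < d) c' i j * b j.
  move=> i hi; have his : i \in s by apply: (mem_rem hi).
  rewrite /w' hw // hw // mulr_sumr -sumrB big_ord_recr /=.
  have -> : c i d * b d - t i * (c k d * b d) = 0.
    by rewrite mulrA /t divfK // subrr.
  rewrite addr0; apply: eq_bigr => j _.
  by rewrite /c' mulrBl mulrA.
have hs' : (d < size s')%N by rewrite /s' size_rem //; case: (size s) hs.
have [a' [Ka' [[i hi ai] Ha']]] := IH s' w' c' (rem_uniq k us) hs' hc' hw'.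
exists (fun i => if i == k then - \sum_(i' <- s') a' i' * t i' else a' i).
have neq : forall i, i \in s' -> (i == k) = false.
  move=> j; rewrite /s' mem_rem_uniq // inE => /andP [hj _].
  by apply/negbTE.
split.
  move=> j; case: (j == k) => //; apply: KN; apply: Ksum => j' _.
  by apply: KM => //; apply: Kdiv.
split; first by exists i; [apply: (mem_rem hi) | rewrite /= neq].
rewrite (perm_big _ (perm_to_rem ks)) big_cons eqxx.
have -> : \sum_(i <- s') (if i == k then - \sum_(i' <- s') a' i' * t i' else a' i) * w i
   = \sum_(i <- s') a' i * w i.
  by apply: eq_big_seq => j hj; rewrite neq.
have e : \sum_(i <- s') a' i * w i = (\sum_(i <- s') a' i * t i) * w k.
  apply/eqP; rewrite -subr_eq0 mulr_suml -sumrB -[X in _ == X]Ha'; apply/eqP.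
  by apply: eq_bigr => j _; rewrite /w' mulrBr [a' j * (_ * w k)]mulrA.
rewrite e mulNr; exact: addNr.
Qed.

End Sub.


Lemma exists_min (f : nat -> rat) (P : pred nat) n :
  (exists2 i, (i < n)%N & P i) ->
  exists i, [/\ (i < n)%N, P i & forall j, (j < n)%N -> P j -> f i <= f j].
Proof.
elim: n => [[i //]|n IH] H.
have [/hasP [i0 hi0 Pi0] | /hasPn H0] := boolP (has P (iota 0 n)).
  have [i [lti Pi mi]] : exists i, [/\ (i < n)%N, P i & forall j, (j < n)%N -> P j -> f i <= f j].
    by apply: IH; exists i0 => //; move: hi0; rewrite mem_iota.
  case Pn: (P n); last first.
    exists i; split => //; first by apply: ltnW.
    move=> j; rewrite ltnS leq_eqVlt => /orP [/eqP -> |]; first by rewrite Pn.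
    by apply: mi.
  case: (leP (f i) (f n)) => hfi.
    exists i; split => //; first by apply: ltnW.
    move=> j; rewrite ltnS leq_eqVlt => /orP [/eqP -> // |]; by apply: mi.
  exists n; split => //.
  move=> j; rewrite ltnS leq_eqVlt => /orP [/eqP -> // |] hj Pj.
  by apply: le_trans (ltW hfi) (mi j hj Pj).
case: H => i hi Pi.
have ein : i = n.
  move: hi; rewrite ltnS leq_eqVlt => /orP [/eqP -> //|hi].
  by have := H0 i; rewrite mem_iota /= hi Pi => /(_ isT).
subst i; exists n; split => // j; rewrite ltnS leq_eqVlt => /orP [/eqP -> // |] hj Pj.
by have := H0 j; rewrite mem_iota /= hj Pj => /(_ isT).
Qed.


Section Unit.
Variables (C : fieldType) (v : C -> rat) (K L : {pred C}).
Hypotheses (Hv : is_valuation v) (HK : is_subfield K) (HL : is_subfield L)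
  (Hext : finite_ext K L) (Hres : finite_residue v K).

Lemma from_eqv (u : C) i j : u != 0 -> v u = 0 -> (i < j)%N -> eqv v (u ^+ i) (u ^+ j) ->
  u ^+ (j - i) = 1 \/ 0 < v (u ^+ (j - i) - 1).
Proof.
move=> u0 vu lij /(mI_opp Hv); rewrite opprB.
have -> : u ^+ j - u ^+ i = u ^+ i * (u ^+ (j - i) - 1).
  by rewrite mulrBr mulr1 -exprD subnKC // ltnW.
have ui0 : u ^+ i != 0 by rewrite expf_neq0.
have [e1|ne] := eqVneq (u ^+ (j - i) - 1) 0; first by left; apply/eqP; rewrite -subr_eq0 e1.
case=> [/eqP|h]; first by rewrite mulf_eq0 (negbTE ui0) (negbTE ne).
by right; move: h; rewrite (vM Hv) // (vX Hv) // vu mulr0 add0r.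
Qed.

Lemma OIpow (u : C) i : u != 0 -> v u = 0 -> OI v (u ^+ i).
Proof. by move=> u0 vu; right; rewrite (vX Hv) // vu mulr0. Qed.

Lemma unit_pow (u : C) : u \in L -> u != 0 -> v u = 0 ->
  exists N, (0 < N)%N /\ (u ^+ N = 1 \/ 0 < v (u ^+ N - 1)).
Proof.
move=> uL u0 vu.
have Lpow : forall i, u ^+ i \in L by move=> i; apply: (KX HL).
case: Hext => subKL [b [bL Hb]].
pose d := size b.
have : forall i : 'I_d.+1, exists c : nat -> C,
    (forall j, c j \in K) /\ u ^+ i = \sum_(j < d) c j * b`_j.
  by move=> i; apply: Hb.
case/fin_all_exists => cf Hcf.
have hw : forall i, i \in iota 0 d.+1 -> u ^+ i = \sum_(j < d) cf (inord i) j * b`_j.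
  move=> i; rewrite mem_iota add0n => /andP [_ hi].
  by have := (Hcf (inord i)).2; rewrite inordK.
have hs : (d < size (iota 0 d.+1))%N by rewrite size_iota.
have hc : forall i j, cf (inord i) j \in K by move=> i j; apply: (Hcf (inord i)).1.
have [a [Ka [[i1 hi1 ai1] Ha]]] := dep HK (b := fun j => b`_j) (iota_uniq 0 d.+1) hs hc hw.
move: hi1; rewrite mem_iota add0n => /andP [_ hi1].
have [i0 [lti0 ai0 mi0]] : exists i, [/\ (i < d.+1)%N, a i != 0 & forall j, (j < d.+1)%N -> a j != 0 -> v (a i) <= v (a j)].
  by apply: (exists_min (fun i => v (a i)) (P := fun i => a i != 0)); exists i1.
pose m := v (a i0).
have [J [ltJ /andP [aJ /eqP vJ] mJ]] : exists i, [/\ (i < d.+1)%N, (a i != 0) && (v (a i) == m) &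
    forall j, (j < d.+1)%N -> (a j != 0) && (v (a j) == m) -> - (i%:R : rat) <= - (j%:R)].
  by apply: (exists_min (fun j => - (j%:R : rat)) (P := fun j => (a j != 0) && (v (a j) == m))); exists i0; rewrite // ai0 eqxx.
have maxJ : forall j, (j < d.+1)%N -> a j != 0 -> v (a j) = m -> (j <= J)%N.
  move=> j hj aj vj; have := mJ j hj; rewrite aj vj eqxx => /(_ isT).
  by rewrite lerN2 ler_nat.
pose al i := a i / a J.
have alK : forall i, al i \in K by move=> i; apply: (Kdiv HK).
have alO : forall i, (i < d.+1)%N -> OI v (al i).
  move=> i hi; rewrite /al; have [->|ai] := eqVneq (a i) 0; first by left; rewrite mul0r.
  right; rewrite /al (vM Hv) ?invr_eq0 // (vV Hv) // vJ subr_ge0.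
  exact: mi0.
have alm : forall i, (J < i)%N -> (i < d.+1)%N -> mI v (al i).
  move=> i hJi hi; rewrite /al; have [->|ai] := eqVneq (a i) 0; first by left; rewrite mul0r.
  right; rewrite /al (vM Hv) ?invr_eq0 // (vV Hv) // vJ subr_gt0.
  rewrite lt_neqAle (mi0 i hi ai) andbT; apply/eqP => emi.
  by have := maxJ i hi ai (esym emi); rewrite leqNgt hJi.
have alJ : al J = 1 by rewrite /al divff.
have rel0 : \sum_(0 <= i < d.+1) al i * u ^+ i = 0.
  have -> : \sum_(0 <= i < d.+1) al i * u ^+ i = (\sum_(i <- iota 0 d.+1) a i * u ^+ i) / a J.
    by rewrite mulr_suml /index_iota subn0; apply: eq_bigr => i _; rewrite /al mulrAC.
  by rewrite Ha mul0r.
rewrite (big_cat_nat _ (n := J)) //= in rel0; last by apply: ltnW.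
rewrite (@big_ltn _ _ _ J d.+1) // alJ mul1r in rel0.
pose R := \sum_(J.+1 <= i < d.+1) al i * u ^+ i.
have mR : mI v R.
  apply: (mI_sum_seq Hv) => i; rewrite mem_index_iota => /andP [h1 h2].
  by rewrite mulrC; apply: (mI_mul Hv); [apply: OIpow | apply: alm].
pose be i := - al i.
have rel : eqv v (u ^+ J) (\sum_(0 <= i < J) be i * u ^+ i).
  have -> : \sum_(0 <= i < J) be i * u ^+ i = - \sum_(0 <= i < J) al i * u ^+ i.
    by rewrite -sumrN; apply: eq_bigr => i _; rewrite mulNr.
  rewrite /eqv opprK.
  have -> : u ^+ J + \sum_(0 <= i < J) al i * u ^+ i = - R.
    apply/eqP; rewrite -addr_eq0; apply/eqP.
    by rewrite (addrC (u ^+ J)) -addrA.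
  by apply: (mI_opp Hv).
have beKO : forall i, (i < J)%N -> be i \in K /\ OI v (be i).
  move=> i hi; split; first by apply: (KN HK).
  by apply: (OI_opp Hv); apply: alO; apply: ltn_trans hi ltJ.
have OIu : OI v u by right; rewrite vu.
have stepC : forall n, exists g : nat -> C, (forall i, (i < J)%N -> g i \in K /\ OI v (g i)) /\
    eqv v (u ^+ n) (\sum_(0 <= i < J) g i * u ^+ i).
  case EJ : J rel beKO => [|J'] rel' beKO'.
    have rel2 : eqv v (u ^+ 0) 0 by rewrite expr0; move: rel'; rewrite big_geq.
    move=> n; exists be; split => //; rewrite big_geq //.
    elim: n => [//|n IH]; rewrite exprS -(mulr0 u).
    exact: (eqv_mul Hv OIu IH).
  elim=> [|n [g [gKO IH]]].
    exists (fun i => if i == 0%N then 1 else 0); split.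
      by move=> i _; case: (i == 0%N); split; [apply: (K1 HK) | apply: OI1 | apply: (K0 HK) | apply: OI0].
    rewrite big_nat_recl // eqxx mul1r big1 ?addr0 ?expr0; first exact: eqv_refl.
    by move=> i _; rewrite /= mul0r.
  pose g' i := (if i is k.+1 then g k else 0) + g J' * be i.
  exists g'; split.
    move=> i hi; have [gK gO] := gKO J' (ltnSn J'); have [bK bO] := beKO' i hi.
    have [hK hO] : (if i is k.+1 then g k else 0) \in K /\ OI v (if i is k.+1 then g k else 0).
      case: i hi {bK bO} => [|k] hk; first by split; [apply: (K0 HK) | apply: OI0].
      by apply: gKO; apply: ltnW.
    split; first by apply: (KD HK) => //; apply: (KM HK).
    by apply: (OI_add Hv) => //; apply: (OI_mul Hv).
  have e1 : u * \sum_(0 <= i < J'.+1) g i * u ^+ i =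
      \sum_(0 <= i < J') g i * u ^+ i.+1 + g J' * u ^+ J'.+1.
    rewrite mulr_sumr big_nat_recr //=; congr (_ + _); last by rewrite exprS mulrCA.
    by apply: eq_bigr => i _; rewrite exprS mulrCA.
  have e2 : \sum_(0 <= i < J'.+1) g' i * u ^+ i =
      \sum_(0 <= i < J') g i * u ^+ i.+1 + g J' * \sum_(0 <= i < J'.+1) be i * u ^+ i.
    rewrite /g'; under eq_bigr => i _ do rewrite mulrDl.
    rewrite big_split /= big_nat_recl //= mul0r add0r; congr (_ + _).
    by rewrite mulr_sumr; apply: eq_bigr => i _; rewrite mulrA.
  rewrite e2 exprS; apply: (eqv_trans Hv (eqv_mul Hv OIu IH)); rewrite e1.
  apply: (eqv_add Hv); first exact: eqv_refl.
  by apply: (eqv_mul Hv) => //; case: (gKO J' (ltnSn J')).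
case: Hres => S [HS1 HS2].
pose FT := {ffun 'I_J -> 'I_(size S)}.
pose T := #|FT|.
have stepD : forall n : 'I_T.+1, exists f : FT, eqv v (u ^+ n) (\sum_(i < J) S`_(f i) * u ^+ i).
  move=> n; have [g [gKO hg]] := stepC n.
  have : forall i : 'I_J, exists k : 'I_(size S), eqv v (g i) S`_k.
    move=> i; have [gK gO] := gKO i (ltn_ord i).
    have [y yS hy] := HS2 _ gK gO.
    have hidx : (index y S < size S)%N by rewrite index_mem.
    exists (Ordinal hidx); rewrite /= nth_index //.
    by case: hy => [->|hy]; [exact: eqv_refl | right].
  case/fin_all_exists => f hf; exists [ffun i => f i].
  apply: (eqv_trans Hv hg); rewrite big_mkord; apply: (eqv_sum Hv) => i _; rewrite ffunE.
  rewrite ![_ * u ^+ i]mulrC; apply: (eqv_mul Hv); [exact: OIpow | exact: hf].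
case/fin_all_exists: stepD => G HG.
have : ~~ injectiveb G.
  apply/negP => /injectiveP inj; have := leq_card G inj.
  by rewrite card_ord /T ltnn.
case/injectivePn => x [y xy Gxy].
have exy : eqv v (u ^+ x) (u ^+ y).
  apply: (eqv_trans Hv (HG x)); rewrite Gxy; apply: (eqv_sym Hv); exact: HG y.
case: (ltngtP x y) => hxy.
- by exists (y - x)%N; split; [rewrite subn_gt0 | exact: from_eqv].
- exists (x - y)%N; split; first by rewrite subn_gt0.
  by apply: from_eqv => //; apply: (eqv_sym Hv).
- by move/val_inj: hxy => /eqP; rewrite (negbTE xy).
Qed.



End Unit.


Lemma s_pow (C : fieldType) (L : {pred C}) (HL : is_subfield L) (s : C -> C) x k :
  hom_Lplus L s -> x \in L -> x != 0 -> s (x ^+ k) = (s x) ^+ k.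
Proof.
case=> hm _ hr xL x0; elim: k => [|k IH].
  by rewrite !expr0; apply: hr; split; [apply: (K1 HL) | exists 1%N; rewrite expr1].
rewrite !exprS hm ?IH // ?expf_neq0 //; exact: (KX HL).
Qed.

Lemma vs_unit (C : fieldType) (v : C -> rat) (p : nat) (K L : {pred C})
  (Hv : is_valuation v) (HK : is_subfield K) (HL : is_subfield L)
  (Hext : finite_ext K L) (Hres : finite_residue v K) (s : C -> C) (u : C) :
  in_Goss v p L s -> u \in L -> u != 0 -> v u = 0 -> v (s u) = 0.
Proof.
move=> [hs [y _ hy]] uL u0 vu.
have [N [N0 hN]] := unit_pow Hv HK HL Hext Hres uL u0 vu.
pose w := u ^+ N.
have wL : w \in L by apply: (KX HL).
have w0 : w != 0 by rewrite expf_neq0.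
have vw : v w = 0 by rewrite (vX Hv) // vu mulr0.
have sw : s w = (s u) ^+ N by exact: (s_pow HL N hs uL u0).
have su0 : s u != 0 by case: hs => _ H _; apply: H.
have sw0 : s w != 0 by rewrite sw expf_neq0.
have vsw : v (s w) = 0.
  have [N1 HN1] := hy w (conj wL hN) 1.
  have wy0 : w ^+ y N1 != 0 by rewrite expf_neq0.
  have vwy : v (w ^+ y N1) = 0 by rewrite (vX Hv) // vw mulr0.
  case: (HN1 N1 (leqnn _)) => [<- //|h1].
  have -> : s w = w ^+ y N1 + (s w - w ^+ y N1) by rewrite addrC subrK.
  have [->|t0] := eqVneq (s w - w ^+ y N1) 0; first by rewrite addr0.
  have hsum : w ^+ y N1 + (s w - w ^+ y N1) != 0 by rewrite addrC subrK.
  rewrite (vstrict Hv wy0 t0 hsum) //.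
  rewrite vwy -opprB (vN Hv); last by rewrite -oppr_eq0 opprB.
  by apply: lt_le_trans h1.
move: vsw; rewrite sw (vX Hv) // => /eqP; rewrite mulf_eq0 pnatr_eq0 (negbTE (lt0n_neq0 N0)) /=.
by move/eqP.
Qed.

Theorem lemma2p6
  (p : nat) (C : closedFieldType) (v : C -> rat) (K L : {pred C})
  (e : nat) (vL : C -> rat) :
  prime p -> (p%:R : C) = 0 ->
  is_valuation v -> vcomplete v predT ->
  is_subfield K -> vcomplete v K ->
  (forall x, x \in K -> x != 0 -> exists z : int, v x = z%:~R) ->
  (exists2 x, x \in K & x != 0 /\ v x = 1) ->
  finite_residue v K ->
  (forall c : C, exists a : nat -> C, (forall n, algebraic_over K (a n)) /\ vlim v a c) ->
  is_subfield L -> finite_ext K L ->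
  (0 < e)%N -> (forall x, vL x = e%:R * v x) ->
  (forall x, x \in L -> x != 0 -> exists z : int, vL x = z%:~R) ->
  (exists2 x, x \in L & x != 0 /\ vL x = 1) ->
  exists r : (C -> C) -> rat,
    (goss_hom v p L r /\
     forall s, in_Goss v p L s ->
       forall a, a \in L -> a != 0 -> vL (s a) = r s * vL a) /\
    (forall r' : (C -> C) -> rat,
       goss_hom v p L r' ->
       (forall s, in_Goss v p L s ->
          forall a, a \in L -> a != 0 -> vL (s a) = r' s * vL a) ->
       forall s, in_Goss v p L s -> r' s = r s).
Proof.
move=> _ _ Hv _ HK _ _ _ Hres _ HL Hext e0 HvL HLint [pi piL [pi0 vpi]].
exists (fun s => vL (s pi)); split; last first.
  move=> r' _ Hr' s Gs; have := Hr' s Gs pi piL pi0.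
  by rewrite vpi mulr1.
split.
  move=> s t [[_ hs2 _] _] [[_ ht2 _] _].
  by rewrite /goss_add !HvL (vM Hv) ?hs2 ?ht2 // mulrDr.
move=> s Gs a aL a0.
have [[hm hnz hr] _] := Gs.
have e0' : (e%:R : rat) != 0 by rewrite pnatr_eq0 -lt0n.
have [z hz] := HLint a aL a0.
have spi0 : s pi != 0 by apply: hnz.
have vpi' : e%:R * v pi = 1 by rewrite -HvL.
rewrite hz !HvL.
case: z hz => k hz.
- pose u := a / pi ^+ k.
  have pk0 : pi ^+ k != 0 by rewrite expf_neq0.
  have pkL : pi ^+ k \in L by apply: (KX HL).
  have uL : u \in L by apply: (KM HL) => //; apply: (KV HL).
  have u0 : u != 0 by rewrite mulf_neq0 ?invr_eq0.
  have vu : v u = 0.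
    apply/eqP; rewrite -(mulrI_eq0 _ (lregP e0')) /u (vM Hv) ?invr_eq0 // (vV Hv) //.
    rewrite (vX Hv) // mulrBr -HvL hz mulrCA vpi' mulr1 /=.
    by rewrite subr_eq0 pmulrn.
  have -> : a = u * pi ^+ k by rewrite /u divfK.
  rewrite hm // (s_pow HL k (proj1 Gs)) // (vM Hv) ?expf_neq0 ?hnz //.
  rewrite (vs_unit Hv HK HL Hext Hres Gs uL u0 vu) add0r (vX Hv) //.
  by rewrite mulrCA -pmulrn mulrC.
- pose u := a * pi ^+ k.+1.
  have pk0 : pi ^+ k.+1 != 0 by rewrite expf_neq0.
  have pkL : pi ^+ k.+1 \in L by apply: (KX HL).
  have uL : u \in L by apply: (KM HL).
  have u0 : u != 0 by rewrite mulf_neq0.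
  have vu : v u = 0.
    apply/eqP; rewrite -(mulrI_eq0 _ (lregP e0')) /u (vM Hv) //.
    rewrite (vX Hv) // mulrDr -HvL hz mulrCA vpi' mulr1.
    by rewrite NegzE mulrNz addrC subr_eq0 pmulrn.
  have hsu := vs_unit Hv HK HL Hext Hres Gs uL u0 vu.
  rewrite /u hm // (s_pow HL k.+1 (proj1 Gs)) // (vM Hv) ?expf_neq0 ?hnz // (vX Hv) // in hsu.
  have -> : v (s a) = - (k.+1%:R * v (s pi)) by apply/eqP; rewrite -addr_eq0 hsu.
  by rewrite NegzE mulrNz -pmulrn mulrN mulrN mulrCA mulrC.
Qed.
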